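(* Assume the standing setting and Condition 1, and fix $s\in(t_0,T)$. Let $\mathcal P=\mathrm{span}\{P_i:i=1,\dots,m\}$ and $\mathcal R=\mathrm{span}\{R_{1,j}(\cdot,s):j=1,\dots,m\}$. Then $\mathcal P$ and $\mathcal R$ are orthogonal with respect to the inner product $\langle f,g\rangle_K=\int_{t_0}^T\mathcal L[f](t)\,\mathcal L[g](t)\,dt$ associated with $K$.
   Context: Standing setting. Fix an integer $m\ge1$ and $-\infty\le t_0<T\le\infty$. $y$ is a zero-mean Gaussian process on $[t_0,T]$ with positive definite covariance $K(t,t')=\mathbb E[y(t)y(t')]$, solving $\mathcal L[y](t):=y^{(m)}(t)+c_{m-1}(t)y^{(m-1)}(t)+\cdots+c_0(t)y(t)=W(t)$, $W$ white noise with $\mathbb E[W(t)W(t')]=\delta(t-t')$. Condition 1: $\mathcal L h=0$ has $m$ linearly independent bounded solutions on $(t_0,T)$. Under Condition 1 there are functions $u_1,\dots,u_{m+1}$ with $0<|u_i|<\infty$ such that $\mathcal L[y]=\frac1{u_{m+1}}\partial_t\tilde D_m\cdots\tilde D_2\frac{y}{u_1}$, $\tilde D_i:=\frac1{u_i}\partial_t$. The state vector is $z=(z_1,\dots,z_m)^T$, $z_1=y$, $z_i=\tilde D_iz_{i-1}$, and $R_{1,j}(t,s)=\mathbb E[y(t)z_j(s)]$. $P_1,\dots,P_m$ are functions with $\tilde D_{i+1}\cdots\tilde D_2P_i=0$ and $\tilde D_i\cdots\tilde D_2P_i=1$. *)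

(* Defs.v *)
From HB Require Import structures.
From mathcomp Require Import all_boot all_order all_algebra.
From mathcomp Require Import all_classical all_reals all_analysis.
Set Implicit Arguments. Unset Strict Implicit. Unset Printing Implicit Defensive.
Import Order.TTheory GRing.Theory Num.Theory.
Import numFieldNormedType.Exports.
Local Open Scope classical_set_scope.
Local Open Scope ring_scope.

Section Defs.
Context {R : realType}.

Definition Iv (t0 T : \bar R) : set R := [set t | (t0 < t%:E < T)%E].

(* \tilde D_i f = (1/u_i) d/dt f ;  u is indexed by 1..m+1 *)
Definition Dt (u : nat -> R -> R) (i : nat) (f : R -> R) : R -> R :=
  fun t => (u i t)^-1 * (derive1 f t).

(* chain u f k = \tilde D_k ... \tilde D_2 f   (chain u f 1 = f) *)
Fixpoint chain (u : nat -> R -> R) (f : R -> R) (k : nat) : R -> R :=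
  match k with
  | 0 => f
  | k'.+1 => match k' with
             | 0 => f
             | _ => Dt u k (chain u f k')
             end
  end.

Definition divu1 (u : nat -> R -> R) (f : R -> R) : R -> R :=
  fun t => f t / u 1%N t.

Definition Lfac (u : nat -> R -> R) (m : nat) (f : R -> R) : R -> R :=
  fun t => (u m.+1 t)^-1 * (derive1 (chain u (divu1 u f) m) t).

Definition Lcoef (c : nat -> R -> R) (m : nat) (f : R -> R) : R -> R :=
  fun t => derive1n m f t + \sum_(k < m) c k t * derive1n k f t.

Definition innerK (t0 T : \bar R) (L : (R -> R) -> R -> R) (f g : R -> R) : \bar R :=
  (\int[lebesgue_measure]_(t in Iv t0 T) (L f t * L g t)%:E)%E.

Definition spanF (m : nat) (F : nat -> R -> R) : set (R -> R) :=
  [set g | exists a : nat -> R, g = fun t => \sum_(1 <= i < m.+1) a i * F i t].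

Definition condition1 (c : nat -> R -> R) (m : nat) (t0 T : \bar R) : Prop :=
  exists h : 'I_m -> R -> R,
    [/\ (forall i k t, (k < m)%N -> Iv t0 T t -> derivable (derive1n k (h i)) t 1),
        (forall i t, Iv t0 T t -> Lcoef c m (h i) t = 0),
        (forall i, exists M : R, forall t, Iv t0 T t -> `|h i t| <= M) &
        (forall a : 'I_m -> R, (forall t, Iv t0 T t -> \sum_i a i * h i t = 0) ->
            forall i, a i = 0)].

Section Prob.
Context {d : measure_display} {Om : measurableType d} (P : probability Om R).

(* X is a (possibly degenerate) Gaussian random variable *)
Definition gaussian_rv (X : Om -> R) : Prop :=
  (exists mu sigma : R, 0 < sigma /\
     forall A : set R, measurable A -> P (X @^-1` A) = normal_prob mu sigma A)
  \/ (exists mu : R, forall A : set R, measurable A -> P (X @^-1` A) = \d_mu A).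

Definition gaussian_process (D : set R) (y : R -> Om -> R) (K : R -> R -> R) : Prop :=
  [/\ (forall t, D t -> measurable_fun setT (y t)),
      (forall n (ts : 'I_n -> R) (a : 'I_n -> R), (forall i, D (ts i)) ->
          gaussian_rv (fun w => \sum_i a i * y (ts i) w)),
      (forall t, D t -> ('E_P[y t] = 0)%E) &
      (forall t t', D t -> D t' -> ('E_P[fun w => (y t w * y t' w)%R] = (K t t')%:E)%E)].

(* mean-square version of  z_i = \tilde D_i z_{i-1}, i.e. z_{i-1}' = u_i z_i in L^2(P) *)
Definition ms_Dt (u : nat -> R -> R) (i : nat) (zprev zi : R -> Om -> R) (D : set R) : Prop :=
  forall s, D s ->
    (fun h => ('E_P[fun w => (((zprev (s + h) w - zprev s w) / h - u i s * zi s w) ^+ 2)%R])%E)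
      @ 0^' --> 0%E.

Definition R1 (y : R -> Om -> R) (z : nat -> R -> Om -> R) (j : nat) (s : R) : R -> R :=
  fun t => fine ('E_P[fun w => (y t w * z j s w)%R])%E.

End Prob.

Definition posdef_kernel (D : set R) (K : R -> R -> R) : Prop :=
  forall n (ts : 'I_n -> R) (a : 'I_n -> R), (forall i, D (ts i)) -> injective ts ->
    (exists i, a i != 0) -> 0 < \sum_i \sum_j a i * a j * K (ts i) (ts j).

End Defs.

(* Main.v *)
Require Import Defs.
From HB Require Import structures.
From mathcomp Require Import all_boot all_order all_algebra.
From mathcomp Require Import all_classical all_reals all_analysis.
From mathcomp Require Import zify.
Import Order.TTheory GRing.Theory Num.Theory.
Import numFieldNormedType.Exports.
Local Open Scope classical_set_scope.
Local Open Scope ring_scope.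

Section H.
Context {R : realType}.

Lemma Iv_near {t0 T : \bar R} {t} : Iv t0 T t -> \forall x \near t, Iv t0 T x.
Proof.
move=> /andP[h1 h2].
have A : \forall x \near t, (t0 < x%:E)%E.
  case: t0 h1 => [r| |] //= h1; last by near=> x; rewrite ltNyr.
  rewrite lte_fin in h1.
  by apply: open_nbhs_nbhs; split => //; exact: open_gt.
have B : \forall x \near t, (x%:E < T)%E.
  case: T h2 => [r| |] //= h2; last by near=> x; rewrite ltry.
  rewrite lte_fin in h2.
  by apply: open_nbhs_nbhs; split => //; exact: open_lt.
by near=> x; apply/andP; split; [near: x; exact: A|near: x; exact: B].
Unshelve. all: by end_near. Qed.

Lemma is_derive_bigsum (I : eqType) (r : seq I) (F : I -> R -> R) t :
  (forall i, i \in r -> derivable (F i) t 1) ->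
  is_derive t 1 (fun x => \sum_(i <- r) F i x) (\sum_(i <- r) 'D_1 (F i) t).
Proof.
elim: r => [|a r IH] H.
  have -> : (fun x => \sum_(i <- [::]) F i x) = cst 0.
    by apply: funext => x; rewrite big_nil.
  rewrite big_nil; exact: is_derive_cst.
have -> : (fun x => \sum_(i <- a :: r) F i x) = F a + (fun x => \sum_(i <- r) F i x).
  by apply: funext => x; rewrite big_cons.
rewrite big_cons.
apply: is_deriveD.
  by apply: derivableP; apply: H; rewrite inE eqxx.
by apply: IH => i ir; apply: H; rewrite inE ir orbT.
Qed.

Lemma derive1_near (f g : R -> R) t :
  (\forall x \near t, f x = g x) -> derive1 f t = derive1 g t.
Proof. by move=> h; rewrite !derive1E; apply: near_eq_derive. Qed.

Lemma derive1_lin (a : nat -> R) (G : nat -> R -> R) (r : seq nat) t :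
  (forall i, i \in r -> derivable (G i) t 1) ->
  derive1 (fun x => \sum_(i <- r) a i * G i x) t = \sum_(i <- r) a i * derive1 (G i) t.
Proof.
move=> H.
have h := @is_derive_bigsum _ r (fun i x => a i * G i x) t.
rewrite derive1E; case: h => [i ir|_ ->]; first by have := derivableM (@derivable_cst _ _ _ (a i) t 1) (H i ir).
rewrite /=; apply: eq_big_seq => i ir.
by rewrite -derive1E derive1Ml //; exact: H.
Qed.
End H.
Theorem lemma2 (R : realType) (m : nat) (t0 T : \bar R)
    (d : measure_display) (Om : measurableType d) (P : probability Om R)
    (c : nat -> R -> R) (u : nat -> R -> R) (K : R -> R -> R)
    (y : R -> Om -> R) (z : nat -> R -> Om -> R) (Pf : nat -> R -> R) (s : R) :
  (1 <= m)%N ->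
  (t0 < T)%E ->
  (* standing setting: y zero-mean Gaussian with positive definite covariance K *)
  gaussian_process P (Iv t0 T) y K ->
  posdef_kernel (Iv t0 T) K ->
  (* Condition 1 *)
  condition1 c m t0 T ->
  (* the functions u_1, ..., u_{m+1}: nonzero and finite, giving the factorization of L *)
  (forall i t, (1 <= i <= m.+1)%N -> Iv t0 T t -> u i t != 0) ->
  (forall f : R -> R,
     (forall k t, (k < m)%N -> Iv t0 T t -> derivable (derive1n k f) t 1) ->
     forall t, Iv t0 T t -> Lcoef c m f t = Lfac u m f t) ->
  (* state vector: z_1 = y, z_i = \tilde D_i z_{i-1} (mean-square derivatives) *)
  z 1%N = y ->
  (forall t, Iv t0 T t -> forall i, (1 <= i <= m)%N -> measurable_fun setT (z i t)) ->
  (forall i, (2 <= i <= m)%N -> ms_Dt P u i (z i.-1) (z i) (Iv t0 T)) ->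
  (* the functions P_1, ..., P_m *)
  (forall i k t, (1 <= i <= m)%N -> (1 <= k <= m)%N -> Iv t0 T t ->
     derivable (chain u (divu1 u (Pf i)) k) t 1) ->
  (forall i t, (1 <= i <= m)%N -> Iv t0 T t -> chain u (divu1 u (Pf i)) i.+1 t = 0) ->
  (forall i t, (1 <= i <= m)%N -> Iv t0 T t -> chain u (divu1 u (Pf i)) i t = 1) ->
  Iv t0 T s ->
  forall f g, spanF m Pf f -> spanF m (fun j => R1 P y z j s) g ->
    innerK t0 T (Lfac u m) f g = 0%E.
Proof.
move=> m1 _ _ _ _ unz _ _ _ _ Pder P0 P1 _ f g [a ->] _.
set Fi := fun i => divu1 u (Pf i).
have Z : forall i, (1 <= i <= m)%N -> forall t, Iv t0 T t ->
    derive1 (chain u (Fi i) m) t = 0.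
  move=> i im.
  have Zk : forall k, (i < k <= m)%N -> forall t, Iv t0 T t -> chain u (Fi i) k t = 0.
    elim=> [|k IH] //= /andP[ik km] t It.
    have [ek|ltik] := eqVneq i k; first by subst k; exact: P0.
    have {}ltik : (i < k)%N by rewrite ltn_neqAle ltik -ltnS.
    case: k IH km ik ltik => [|k] IH km ik ltik; first by rewrite ltn0 in ltik.
    rewrite /Dt (@derive1_near _ _ (cst 0)); first by rewrite derive1_cst mulr0.
    move: (Iv_near It); apply: filterS => x Ix; apply: IH => //.
    by rewrite ltik /= ltnW.
  move=> t It.
  have [eim|ltim] := eqVneq i m.
    rewrite (@derive1_near _ _ (cst 1)) ?derive1_cst //.
    move: (Iv_near It); apply: filterS => x Ix; rewrite -eim; exact: P1.
  rewrite (@derive1_near _ _ (cst 0)) ?derive1_cst //.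
  move: (Iv_near It); apply: filterS => x Ix; apply: Zk => //.
  by rewrite leqnn andbT ltn_neqAle ltim; case/andP: im.
have Lin : forall k, (1 <= k <= m)%N -> forall t, Iv t0 T t ->
    chain u (divu1 u (fun t => \sum_(1 <= i < m.+1) a i * Pf i t)) k t =
    \sum_(1 <= i < m.+1) a i * chain u (Fi i) k t.
  elim=> [|k IH] // /andP[_ km] t It.
  case: k IH km => [|k] IH km.
    rewrite /= /divu1 /Fi mulr_suml; apply: eq_bigr => i _; by rewrite mulrA.
  rewrite /= /Dt (@derive1_near _ _ (fun x => \sum_(1 <= i < m.+1) a i * chain u (Fi i) k.+1 x)).
    rewrite derive1_lin; last by move=> i; rewrite mem_index_iota => /andP[i1 im]; apply: Pder => //; lia.
    rewrite mulr_sumr; apply: eq_bigr => i _; by rewrite mulrCA.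
  move: (Iv_near It); apply: filterS => x Ix; apply: IH => //; lia.
have Lf0 : forall t, Iv t0 T t ->
    Lfac u m (fun t => \sum_(1 <= i < m.+1) a i * Pf i t) t = 0.
  move=> t It; rewrite /Lfac (@derive1_near _ _ (fun x => \sum_(1 <= i < m.+1) a i * chain u (Fi i) m x)).
    rewrite derive1_lin; last by move=> i; rewrite mem_index_iota => /andP[i1 im]; apply: Pder => //; lia.
    rewrite big_seq big1 ?mulr0 // => i; rewrite mem_index_iota => im.
    by rewrite Z ?mulr0.
  move: (Iv_near It); apply: filterS => x Ix; apply: Lin => //; lia.
rewrite /innerK.
transitivity (\int[lebesgue_measure]_(t in Iv t0 T) (cst 0%E t))%E; last exact: integral0.
apply: eq_integral => t; rewrite inE => /Lf0 ->; by rewrite mul0r.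
Qed.
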